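(* Let $k\ge 1$. Let $\mathcal M^\circ_{2k+1,0}$ (resp. $\mathcal M^\circ_{2k+1,1}$) be the set of elements of $\mathcal M^\circ_{2k+1}$ whose central square $k+1$ is land (resp. water). Then $\mathrm{red}\circ\mathrm{contr}$ restricts to bijections $\mathcal M^\circ_{2k+1,0}\to\mathcal N_k$ and $\mathcal M^\circ_{2k+1,1}\to\mathcal N_{k,1}\cup\{R_{\mathrm{land}}\}$. Consequently $M^\circ_{2k+1} = N_k+N_{k,1}+1 = N_k + N_{k+1,2}$.
   Context: Colorings. Each square is colored water or land. Two distinct squares are adjacent if they share an edge after all edge identifications; a set of squares is connected if its induced adjacency graph is connected (empty set counts as connected). (N1): the water is connected. (N2$\circ$): no interior (non-boundary) vertex of the tiling has all of the squares incident to it water. A $2\times k$ Nurikabe rectangle is a coloring of the $2\times k$ grid (columns $1,\dots,k$ left to right, no identifications) with connected water and no $2\times 2$ block of water squares; $\mathcal N_k$ is the set of these, $N_k=|\mathcal N_k|$; $\mathcal N_{k,i}$ is the subset with exactly $i$ water squares in column $k$, $N_{k,i}=|\mathcal N_{k,i}|$. $R_{\mathrm{land}}\in\mathcal N_k$ is the all-land rectangle. Tile $[0,n]\times[0,1]$ by unit squares $[j-1,j]\times[0,1]$, called square $j$. The $1\times n$ Möbius strip identifies $(x,1)\sim(n-x,0)$ for $x\in[0,n]$; its boundary is the image of the vertical sides. $\mathcal M^\circ_n$ is the set of colorings of the $1\times n$ Möbius strip satisfying (N1) and (N2$\circ$), $M^\circ_n=|\mathcal M^\circ_n|$. Contraction: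 for a coloring of the $1\times(2k+1)$ Möbius strip, $\mathrm{contr}$ gives the coloring of the $1\times 2k$ Möbius strip obtained by deleting square $k+1$, with square $j\le k$ keeping position $j$ and square $j\ge k+2$ moving to position $j-1$. Rectangular reduction: for a coloring of the $1\times 2k$ Möbius strip, $\mathrm{red}$ gives the coloring of the $2\times k$ grid whose column $j$ has top square colored as square $j$ and bottom square colored as square $2k+1-j$. *)

(* Defs.v *)
(* Water = true, land = false. Squares are 0-indexed:
   square j (1-indexed, as in the paper) is index j-1. *)
From mathcomp Require Import all_boot.
Set Implicit Arguments. Unset Strict Implicit. Unset Printing Implicit Defensive.

Definition strip (n : nat) := {ffun 'I_n -> bool}.
Definition top : 'I_2 := ord0.
Definition bot : 'I_2 := ord_max.
Definition rect (k : nat) := {ffun 'I_2 * 'I_k -> bool}.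

(* Total accessor: color of the square with (0-based) index i; false (land)
   if i is out of range (only used for convenience). *)
Definition sat n (c : strip n) (i : nat) : bool :=
  if insub i is Some j then c j else false.
Definition rat k (r : rect k) (row : 'I_2) (col : nat) : bool :=
  if insub col is Some j then r (row, j) else false.

Definition connectedb (T : finType) (adj : rel T) (W : pred T) : bool :=
  [forall x, forall y, W x ==> W y ==>
     connect (fun a b => [&& W a, W b & adj a b]) x y].

(* Adjacency on the 1 x n Moebius strip, after the identification
   (x,1) ~ (n-x,0): square j is adjacent to j-1, j+1 (shared vertical edges)
   and to square n+1-j (top edge of j glued to bottom edge of n+1-j);
   in 0-based indices i ~ j iff i <> j and (|i-j| = 1 or i + j = n-1). *)
Definition mob_adj n : rel 'I_n :=
  fun i j => (i != j) && [|| i.+1 == j, j.+1 == i | i + j == n.-1].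

(* Interior vertices of the Moebius strip: the points (x,0) ~ (n-x,1) with
   1 <= x <= n-1; the squares incident to it are (1-indexed) x, x+1, n-x,
   n+1-x, i.e. 0-based x-1, x, n-x-1, n-x. *)
Definition N2o n (c : strip n) : bool :=
  [forall x : 'I_n, (0 < x) ==>
     ~~ [&& sat c x.-1, sat c x, sat c (n - x).-1 & sat c (n - x)]].

Definition N1 n (c : strip n) : bool := connectedb (@mob_adj n) (fun i => c i).

Definition Mo (n : nat) : {set strip n} := [set c : strip n | N1 c && N2o c].

Definition grid_adj k : rel ('I_2 * 'I_k) :=
  fun p q => ((p.1 == q.1) && ((p.2.+1 == q.2 :> nat) || (q.2.+1 == p.2 :> nat)))
          || ((p.2 == q.2) && (p.1 != q.1)).

Definition no_2x2 k (r : rect k) : bool :=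
  [forall j : 'I_k, ~~ [&& rat r top j, rat r bot j, rat r top j.+1 & rat r bot j.+1]].

Definition Nur (k : nat) : {set rect k} :=
  [set r : rect k | connectedb (@grid_adj k) (fun p => r p) && no_2x2 r].

(* \mathcal N_{k,i} : those with exactly i water squares in column k
   (0-based column k-1). *)
Definition NurCol (k i : nat) : {set rect k} :=
  [set r in Nur k | rat r top k.-1 + rat r bot k.-1 == i].

Definition Rland k : rect k := [ffun => false].

(* contr: delete square k+1 (0-based index k) of a 1 x (2k+1) strip. *)
Definition contr k (c : strip k.*2.+1) : strip k.*2 :=
  [ffun j : 'I_k.*2 => sat c (if j < k then j : nat else j.+1)].

(* red: column j (1-indexed) has top square j and bottom square 2k+1-j;
   0-based: column j has top index j and bottom index 2k-1-j. Row 0 = top. *)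
Definition red k (c : strip k.*2) : rect k :=
  [ffun p : 'I_2 * 'I_k =>
     if p.1 == top then sat c p.2 else sat c (k.*2.-1 - p.2)].

Definition redcontr k (c : strip k.*2.+1) : rect k := red (contr c).

Definition Mo0 k : {set strip k.*2.+1} := [set c in Mo k.*2.+1 | ~~ sat c k].
Definition Mo1 k : {set strip k.*2.+1} := [set c in Mo k.*2.+1 | sat c k].

(* Main.v *)
Require Import Defs.
From mathcomp Require Import all_boot zify.
Set Implicit Arguments. Unset Strict Implicit. Unset Printing Implicit Defensive.

Lemma connect_hom (T U : finType) (e : rel T) (e' : rel U) (f : T -> U) :
  (forall a b, e a b -> connect e' (f a) (f b)) ->
  forall x y, connect e x y -> connect e' (f x) (f y).
Proof.
move=> H x y /connectP [p pth ->{y}].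
elim: p x pth => [|b p IH] a /=; first by rewrite connect0.
by case/andP=> eab pth; apply: connect_trans (H _ _ eab) (IH _ pth).
Qed.

Lemma connect_inv (T : finType) (e : rel T) (P : pred T) :
  (forall a b, e a b -> P a -> P b) ->
  forall x y, connect e x y -> P x -> P y.
Proof.
move=> H x y /connectP [p pth ->{y}].
elim: p x pth => [|b p IH] a //= /andP[eab pth] Pa.
exact: IH pth (H _ _ eab Pa).
Qed.

Lemma eq_connectedb (T : finType) (adj : rel T) (W1 W2 : pred T) :
  W1 =1 W2 -> connectedb adj W1 = connectedb adj W2.
Proof.
move=> E; rewrite /connectedb; apply: eq_forallb => x; apply: eq_forallb => y.
rewrite !E; congr (_ ==> _ ==> _); apply: eq_connect => a b; by rewrite !E.
Qed.

Section G.
Variables (T : finType) (adj : rel T).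
Hypothesis adj_sym : symmetric adj.

Lemma conn_pendant (W W' : pred T) v u :
  (forall x, W' x = (x == v) || W x) -> ~~ W v -> W u -> adj v u ->
  (forall w, W w -> adj v w -> w = u) ->
  connectedb adj W' = connectedb adj W.
Proof.
move=> EW nWv Wu avu Hn.
have vNW : forall x, W x -> x != v by move=> x Wx; apply/eqP=> ev; rewrite -ev Wx in nWv.
apply/idP/idP.
- move/forallP=> C; apply/forallP=> x; apply/forallP=> y; apply/implyP=> Wx; apply/implyP=> Wy.
  have := C x; move/forallP/(_ y); rewrite !EW Wx Wy !orbT /= => Cxy.
  pose f := fun z => if z == v then u else z.
  have -> : x = f x by rewrite /f (negbTE (vNW _ Wx)).
  have -> : y = f y by rewrite /f (negbTE (vNW _ Wy)).
  apply: connect_hom Cxy => a b /and3P[Wa Wb ab].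
  rewrite /f; move: Wa Wb ab; rewrite !EW.
  case: (eqVneq a v) => [->|av]; case: (eqVneq b v) => [->|bv] //= Wa Wb ab.
  + by rewrite (Hn _ Wb ab) connect0.
  + by rewrite adj_sym in ab; rewrite (Hn _ Wa ab) connect0.
  + by apply: connect1; rewrite Wa Wb ab.
- move/forallP=> C.
  have sub : forall x y, connect (fun a b => [&& W a, W b & adj a b]) x y ->
       connect (fun a b => [&& W' a, W' b & adj a b]) x y.
    move=> x y; apply: (@connect_hom _ _ _ _ id) => a b /and3P[Wa Wb ab].
    by apply: connect1; rewrite !EW Wa Wb ab !orbT.
  have Cu : forall y, W y -> connect (fun a b => [&& W' a, W' b & adj a b]) v y.
    move=> y Wy; apply: (@connect_trans _ _ u); first by apply: connect1; rewrite !EW eqxx Wu orbT avu.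
    by apply: sub; have := C u; move/forallP/(_ y); rewrite Wu Wy.
  have symE : connect_sym (fun a b => [&& W' a, W' b & adj a b]).
    by apply: sym_connect_sym => a b; rewrite andbCA adj_sym andbA.
  apply/forallP=> x; apply/forallP=> y; rewrite !EW.
  case: (eqVneq x v) => [->|xv] /=; case: (eqVneq y v) => [->|yv] //=; rewrite ?connect0 ?implybT //.
  + by apply/implyP; apply: Cu.
  + by apply/implyP=> Wx; rewrite symE; apply: Cu.
  + apply/implyP=> Wx; apply/implyP=> Wy; apply: sub.
    by have := C x; move/forallP/(_ y); rewrite Wx Wy.
Qed.

Lemma conn_isolated (W W' : pred T) v :
  (forall x, W' x = (x == v) || W x) -> ~~ W v ->
  (forall w, W w -> ~~ adj v w) ->
  connectedb adj W' = [forall x, ~~ W x].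
Proof.
move=> EW nWv Hn.
have vNW : forall x, W x -> x != v by move=> x Wx; apply/eqP=> ev; rewrite -ev Wx in nWv.
apply/idP/idP.
- move/forallP=> C; apply/forallP=> x; apply/negP=> Wx.
  have := C v; move/forallP/(_ x); rewrite !EW eqxx Wx orbT /= => Cvx.
  have H : forall a b, [&& W' a, W' b & adj a b] -> a == v -> b == v.
    move=> a b /and3P[Wa Wb ab] /eqP ea; move: Wb; rewrite EW; case/orP=> // Wb.
    by rewrite ea in ab; move: (Hn _ Wb); rewrite ab.
  have := connect_inv (P := fun z => z == v) H Cvx (eqxx v).
  by rewrite (negbTE (vNW _ Wx)).
- move/forallP=> N; apply/forallP=> x; apply/forallP=> y; rewrite !EW.
  have := N x; have := N y; move=> /negbTE-> /negbTE->; rewrite !orbF.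
  by apply/implyP=> /eqP->; apply/implyP=> /eqP->; rewrite connect0.
Qed.

End G.

Lemma conn_embed (T U : finType) (adjT : rel T) (adjU : rel U) (phi : T -> U)
  (WT : pred T) (WU : pred U) :
  injective phi -> (forall a b, adjU (phi a) (phi b) = adjT a b) ->
  (forall x, WU x -> exists a, x = phi a) -> (forall a, WT a = WU (phi a)) ->
  connectedb adjU WU = connectedb adjT WT.
Proof.
move=> inj Eadj Hc EW; apply/idP/idP.
- move/forallP=> C; apply/forallP=> x; apply/forallP=> y; rewrite !EW.
  apply/implyP=> Wx; apply/implyP=> Wy.
  have := C (phi x); move/forallP/(_ (phi y)); rewrite Wx Wy /= => /connectP[p pth ely].
  elim: p x pth ely {Wx} => [|b p IH] a /=; first by move=> _ e; rewrite (inj _ _ e) connect0.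
  case/andP=> /and3P[Wa Wb ab] pth el.
  have [b' eb] := Hc _ Wb; subst b.
  apply: (connect_trans _ (IH _ pth el)); apply: connect1.
  by rewrite !EW Wa Wb -Eadj ab.
- move/forallP=> C; apply/forallP=> x; apply/forallP=> y.
  apply/implyP=> Wx; apply/implyP=> Wy.
  have [x' ex] := Hc _ Wx; have [y' ey] := Hc _ Wy; subst x y.
  have := C x'; move/forallP/(_ y'); rewrite !EW Wx Wy /=.
  apply: connect_hom => a b /and3P[Wa Wb ab].
  by apply: connect1; rewrite -!EW Wa Wb Eadj ab.
Qed.

Lemma I2cases (i : 'I_2) : i = top \/ i = bot.
Proof. case: i => [[|[|m]] H]; [left|right|by []]; exact/val_inj. Qed.

Lemma bottop : (bot == top) = false. Proof. by []. Qed.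
Lemma topbot : (top == bot) = false. Proof. by []. Qed.

Lemma sat_val n (c : strip n) (i : 'I_n) : sat c i = c i.
Proof. by rewrite /sat valK. Qed.

Lemma sat_out n (c : strip n) i : n <= i -> sat c i = false.
Proof. by move=> h; rewrite /sat insubF // ltnNge h. Qed.

Lemma rat_val k (r : rect k) row (j : 'I_k) : rat r row j = r (row, j).
Proof. by rewrite /rat valK. Qed.

Lemma rat_out k (r : rect k) row j : k <= j -> rat r row j = false.
Proof. by move=> h; rewrite /rat insubF // ltnNge h. Qed.

Lemma sat_contr k (c : strip k.*2.+1) m :
  sat (contr c) m = (m < k.*2) && sat c (if m < k then m else m.+1).
Proof.
rewrite /sat; case: insubP => [j Hj <-|/negbTE ->] //=.
by rewrite ffunE ltn_ord.
Qed.

Lemma redcontrE k (c : strip k.*2.+1) p :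
  redcontr c p = sat c (if p.1 == top then (p.2 : nat) else k.*2 - p.2).
Proof.
rewrite /redcontr /red ffunE !sat_contr; case: p => p1 p2 /=.
have lt := ltn_ord p2; case: ifP => _.
  by rewrite (_ : (p2 : nat) < k.*2 = true) ?lt //; lia.
rewrite (_ : k.*2.-1 - p2 < k.*2 = true); last by lia.
rewrite (_ : k.*2.-1 - p2 < k = false); last by lia.
congr (sat c _); lia.
Qed.

Lemma rat_rc k (c : strip k.*2.+1) row j :
  rat (redcontr c) row j = (j < k) && sat c (if row == top then j else k.*2 - j).
Proof.
rewrite /rat; case: insubP => [i Hi <-|/negbTE ->] //=.
by rewrite ltn_ord redcontrE.
Qed.

Definition phi k (p : 'I_2 * 'I_k) : 'I_(k.*2.+1) :=
  inord (if p.1 == top then (p.2 : nat) else k.*2 - p.2).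

Lemma phiE k p : nat_of_ord (@phi k p) = if p.1 == top then (p.2 : nat) else k.*2 - p.2.
Proof. case: p => p1 p2; rewrite /phi /=; have lt := ltn_ord p2; rewrite inordK //; case: ifP => _; lia. Qed.

Lemma redcontr_phi k (c : strip k.*2.+1) p : redcontr c p = c (phi p).
Proof. by rewrite -sat_val /= phiE redcontrE. Qed.

Lemma phi_inj k : injective (@phi k).
Proof.
move=> [a1 a2] [b1 b2] /(congr1 val) /=; rewrite !phiE /= => e.
have la := ltn_ord a2; have lb := ltn_ord b2.
case: (I2cases a1) => ea; case: (I2cases b1) => eb; subst; rewrite ?eqxx ?bottop ?topbot in e;
 try (have e2 : a2 = b2 by apply/val_inj => /=; lia); try by rewrite e2.
all: lia.
Qed.

Lemma phi_adj k p q : mob_adj (@phi k p) (phi q) = grid_adj p q.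
Proof.
move: p q => [a1 a2] [b1 b2].
rewrite /mob_adj /grid_adj -val_eqE /= !phiE /=.
have la := ltn_ord a2; have lb := ltn_ord b2.
rewrite -[a2 == b2]val_eqE /=.
case: (I2cases a1) => ->; case: (I2cases b1) => -> //=; lia.
Qed.

Definition center k : 'I_(k.*2.+1) := inord k.
Lemma centerE k : nat_of_ord (center k) = k.
Proof. by rewrite /center inordK //; lia. Qed.

Lemma phi_center k p : @phi k p != center k.
Proof. rewrite -val_eqE /= phiE centerE; case: p => p1 p2 /=; have := ltn_ord p2; case: ifP => _; lia. Qed.

Lemma center_adj k (i : 'I_(k.*2.+1)) : 1 <= k ->
  mob_adj (center k) i = (nat_of_ord i == k.-1) || (nat_of_ord i == k.+1).
Proof. move=> hk; rewrite /mob_adj -val_eqE /= centerE; have := ltn_ord i; lia. Qed.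

Lemma phi_codom k (x : 'I_(k.*2.+1)) : x != center k -> exists p, x = phi p.
Proof.
rewrite -val_eqE /= centerE => nx; have lx := ltn_ord x.
case: (ltnP x k) => h.
  exists (top, Ordinal h); apply/val_inj => /=; rewrite phiE //.
have h' : k.*2 - x < k by lia.
exists (bot, Ordinal h'); apply/val_inj => /=; rewrite phiE /=; lia.
Qed.

Lemma mob_sym n : symmetric (@mob_adj n).
Proof. move=> i j; rewrite /mob_adj eq_sym; congr (_ && _); lia. Qed.

Lemma grid_sym k : symmetric (@grid_adj k).
Proof.
move=> [a1 a2] [b1 b2]; rewrite /grid_adj /= -!val_eqE /=.
case: (I2cases a1) => ->; case: (I2cases b1) => -> //=; lia.
Qed.

Lemma sat_center k (c : strip k.*2.+1) : c (center k) = sat c k.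
Proof. by rewrite -sat_val /= centerE. Qed.

Lemma N1_land k (c : strip k.*2.+1) : ~~ sat c k ->
  N1 c = connectedb (@grid_adj k) (fun p => redcontr c p).
Proof.
move=> nc; rewrite /N1; apply: (conn_embed (@phi_inj k) (@phi_adj k)).
  move=> x cx; apply: phi_codom; apply/eqP=> ex; move: cx; rewrite ex sat_center.
  by rewrite (negbTE nc).
by move=> a; rewrite redcontr_phi.
Qed.

Lemma N1_water k (c : strip k.*2.+1) : 1 <= k -> sat c k ->
  ~~ (sat c k.-1 && sat c k.+1) ->
  N1 c = connectedb (@grid_adj k) (fun p => redcontr c p) &&
         (sat c k.-1 || sat c k.+1 || [forall p, ~~ redcontr c p]).
Proof.
move=> hk ck nboth; rewrite /N1.
pose W := fun i : 'I_(k.*2.+1) => (i != center k) && c i.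
have EW : forall x, c x = (x == center k) || W x.
  by move=> x; rewrite /W; case: eqVneq => // ->; rewrite sat_center.
have nWv : ~~ W (center k) by rewrite /W eqxx.
have Wemb : connectedb (@mob_adj _) W = connectedb (@grid_adj k) (fun p => redcontr c p).
  apply: (conn_embed (@phi_inj k) (@phi_adj k)).
    by move=> x /andP[nx _]; apply: phi_codom.
  by move=> a; rewrite /W phi_center redcontr_phi.
have satv : forall i : 'I_(k.*2.+1), sat c i = c i := fun i => sat_val c i.
have Hpend : forall m, m < k.*2.+1 -> (m == k.-1) || (m == k.+1) -> sat c m ->
    (forall w, W w -> mob_adj (center k) w -> (w : nat) = m) ->
    connectedb (@mob_adj _) c = connectedb (@mob_adj _) W.
  move=> m lm hm cm Hw.
  have nm : (m == k) = false by lia.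
  apply: (conn_pendant (@mob_sym _) (u := inord m) EW nWv).
  - rewrite /W -val_eqE /= centerE inordK // nm /= -sat_val /= inordK //.
  - by rewrite center_adj // inordK.
  - by move=> w Ww aw; apply/val_inj => /=; rewrite inordK // (Hw _ Ww aw).
case: (boolP (sat c k.-1)) => [c1|nc1].
  rewrite /= andbT -Wemb; apply: (Hpend k.-1) => //; try lia.
  move=> w /andP[_ cw]; rewrite center_adj // => /orP[/eqP //|/eqP ew].
  by move: nboth; rewrite c1 -ew sat_val cw.
case: (boolP (sat c k.+1)) => [c2|nc2].
  rewrite /= andbT -Wemb; apply: (Hpend k.+1) => //; try lia.
  move=> w /andP[_ cw]; rewrite center_adj // => /orP[/eqP ew|/eqP //].
  by move: nc1; rewrite -ew sat_val cw.
rewrite /= (conn_isolated EW nWv).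
- have -> : [forall x, ~~ W x] = [forall p, ~~ redcontr c p].
    apply/forallP/forallP => H x.
      by rewrite redcontr_phi; have := H (phi x); rewrite /W phi_center.
    rewrite /W; case: eqVneq => //= nx; have [p ->] := phi_codom nx.
    by rewrite -redcontr_phi.
  case: forallP => H; last by rewrite andbF.
  by rewrite andbT; symmetry; apply/forallP=> x; apply/forallP=> y; have := H x; move/negbTE->.
- move=> w /andP[_ cw]; rewrite center_adj //; apply/negP => /orP[/eqP ew|/eqP ew].
    by move: nc1; rewrite -ew sat_val cw.
  by move: nc2; rewrite -ew sat_val cw.
Qed.

Lemma no2x2_rc k (c : strip k.*2.+1) : no_2x2 (redcontr c) =
  [forall j : 'I_k, (j.+1 < k) ==>
     ~~ [&& sat c j, sat c (k.*2 - j), sat c j.+1 & sat c (k.*2 - j.+1)]].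
Proof.
rewrite /no_2x2; apply: eq_forallb => j; rewrite !rat_rc /= ltn_ord /=.
by case: (ltnP j.+1 k) => //= _; rewrite !andbF.
Qed.

Lemma N2o_rc k (c : strip k.*2.+1) : 1 <= k ->
  N2o c = no_2x2 (redcontr c) && ~~ [&& sat c k.-1, sat c k & sat c k.+1].
Proof.
move=> hk; rewrite no2x2_rc /N2o; apply/idP/idP.
- move/forallP=> H; apply/andP; split.
    apply/forallP=> j; apply/implyP=> hj.
    have := H (inord j.+1); rewrite inordK; last by lia.
    rewrite (_ : (k.*2.+1 - j.+1).-1 = k.*2 - j.+1); last by lia.
    rewrite (_ : k.*2.+1 - j.+1 = k.*2 - j); last by lia.
    rewrite /=.
    by case: (sat c j); case: (sat c j.+1); case: (sat c (k.*2 - j)); case: (sat c (k.*2 - j.+1)).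
  have := H (inord k); rewrite inordK; last by lia.
  rewrite (_ : (k.*2.+1 - k).-1 = k); last by lia.
  rewrite (_ : k.*2.+1 - k = k.+1); last by lia.
  rewrite hk /=.
  by case: (sat c k.-1); case: (sat c k); case: (sat c k.+1).
- case/andP=> /forallP H1 H2; apply/forallP=> x; apply/implyP=> x0.
  have lx := ltn_ord x.
  case: (ltnP x k) => h1.
    have hj : x.-1 < k by lia.
    have := H1 (Ordinal hj); rewrite /=.
    rewrite (_ : (x.-1).+1 = x); last by lia.
    rewrite h1 /=.
    rewrite (_ : (k.*2.+1 - x).-1 = k.*2 - x); last by lia.
    rewrite (_ : k.*2.+1 - x = k.*2 - x.-1); last by lia.
    by case: (sat c x.-1); case: (sat c x); case: (sat c (k.*2 - x)); case: (sat c (k.*2 - x.-1)).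
  case: (leqP x k.+1) => h2.
    move: H2; have [->|->] : (x : nat) = k \/ (x : nat) = k.+1 by lia.
      rewrite (_ : (k.*2.+1 - k).-1 = k); last by lia.
      rewrite (_ : k.*2.+1 - k = k.+1); last by lia.
      by case: (sat c k.-1); case: (sat c k); case: (sat c k.+1).
    rewrite (_ : (k.*2.+1 - k.+1).-1 = k.-1); last by lia.
    rewrite (_ : k.*2.+1 - k.+1 = k); last by lia.
    rewrite (_ : k.+1.-1 = k); last by lia.
    by case: (sat c k.-1); case: (sat c k); case: (sat c k.+1).
  have hj : k.*2 - x < k by lia.
  have := H1 (Ordinal hj); rewrite /=.
  rewrite (_ : (k.*2 - x).+1 < k = true); last by lia.
  rewrite (_ : k.*2 - (k.*2 - x) = x); last by lia.
  rewrite (_ : k.*2 - (k.*2 - x).+1 = x.-1); last by lia.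
  rewrite (_ : (k.*2 - x).+1 = k.*2.+1 - x); last by lia.
  rewrite (_ : k.*2 - x = (k.*2.+1 - x).-1); last by lia.
  by case: (sat c x.-1); case: (sat c x); case: (sat c (k.*2.+1 - x).-1); case: (sat c (k.*2.+1 - x)).
Qed.

Lemma redcontr_inj k (c1 c2 : strip k.*2.+1) :
  redcontr c1 = redcontr c2 -> sat c1 k = sat c2 k -> c1 = c2.
Proof.
move=> E ek; apply/ffunP => x; case: (eqVneq x (center k)) => [->|nx].
  by rewrite !sat_center.
by have [p ->] := phi_codom nx; rewrite -!redcontr_phi E.
Qed.

Definition lift k (r : rect k) (b : bool) : strip k.*2.+1 :=
  [ffun i : 'I_k.*2.+1 => if (i : nat) < k then rat r top i
     else if (i : nat) == k then b else rat r bot (k.*2 - i)].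

Lemma sat_lift k (r : rect k) b m : m < k.*2.+1 ->
  sat (lift r b) m = if m < k then rat r top m
     else if m == k then b else rat r bot (k.*2 - m).
Proof.
move=> lm; rewrite /sat; case: insubP => [i _ <-|]; first by rewrite ffunE.
by rewrite lm.
Qed.

Lemma redcontr_lift k (r : rect k) b : redcontr (lift r b) = r.
Proof.
apply/ffunP=> [[p1 p2]]; rewrite redcontrE /=; have lt := ltn_ord p2.
case: (I2cases p1) => ->; rewrite ?eqxx ?bottop /=.
  by rewrite sat_lift ?lt ?rat_val //; lia.
rewrite sat_lift; last by lia.
rewrite (_ : k.*2 - p2 < k = false); last by lia.
rewrite (_ : (k.*2 - p2 == k) = false); last by lia.
by rewrite (_ : k.*2 - (k.*2 - p2) = p2) ?rat_val //; lia.
Qed.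

Lemma sat_lift_k k (r : rect k) b : sat (lift r b) k = b.
Proof. by rewrite sat_lift ?ltnn ?eqxx //; lia. Qed.

Lemma rat_Rland k row j : rat (Rland k) row j = false.
Proof. rewrite /rat; case: insubP => [i _ _|//]; by rewrite ffunE. Qed.

Lemma Rland_eq k (r : rect k) : (r == Rland k) = [forall p, ~~ r p].
Proof.
apply/eqP/forallP => [->|H]; first by move=> p; rewrite ffunE.
by apply/ffunP=> p; rewrite ffunE; apply/negbTE.
Qed.

Lemma Rland_nur k : Rland k \in Nur k.
Proof.
rewrite inE; apply/andP; split.
  by apply/forallP=> x; apply/forallP=> y; rewrite ffunE.
by apply/forallP=> j; rewrite !rat_Rland.
Qed.

Lemma Mo0E k (c : strip k.*2.+1) : 1 <= k ->
  (c \in Mo0 k) = ~~ sat c k && (redcontr c \in Nur k).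
Proof.
move=> hk; rewrite !inE; case: (boolP (sat c k)) => ck; first by rewrite andbF.
by rewrite N1_land // N2o_rc // (negbTE ck) andbF /= !andbT.
Qed.

Lemma Mo1E k (c : strip k.*2.+1) : 1 <= k ->
  (c \in Mo1 k) = sat c k && (redcontr c \in NurCol k 1 :|: [set Rland k]).
Proof.
move=> hk; rewrite !inE; case: (boolP (sat c k)) => ck; last by rewrite andbF.
rewrite andbT /= !rat_rc /= (_ : k.-1 < k = true); last by lia.
rewrite (_ : k.*2 - k.-1 = k.+1); last by lia.
rewrite N2o_rc // ck /= Rland_eq.
case: (boolP (sat c k.-1)) => c1; case: (boolP (sat c k.+1)) => c2 /=.
- have Fa : [forall p, ~~ redcontr c p] = false.
    have lt : k.-1 < k by lia.
    apply/negbTE/forallP => H; have := H (top, Ordinal lt); by rewrite redcontrE /= c1.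
  by rewrite !andbF /= Fa.
- have Fa : [forall p, ~~ redcontr c p] = false.
    have lt : k.-1 < k by lia.
    apply/negbTE/forallP => H; have := H (top, Ordinal lt); by rewrite redcontrE /= c1.
  by rewrite andbT N1_water ?c1 ?c2 //= Fa !andbT !orbF.
- have Fa : [forall p, ~~ redcontr c p] = false.
    have lt : k.-1 < k by lia.
    apply/negbTE/forallP => H; have := H (bot, Ordinal lt); rewrite redcontrE /=.
    by rewrite (_ : k.*2 - k.-1 = k.+1) ?c2 //; lia.
  by rewrite andbT N1_water ?(negbTE c1) ?c2 //= Fa !andbT !orbF.
- rewrite andbT N1_water ?(negbTE c1) ?(negbTE c2) //= andbF /=.
  case: (boolP [forall p, ~~ redcontr c p]) => H; last by rewrite !andbF.
  have := Rland_nur k; rewrite -(eqP (_ : redcontr c == Rland k)) ?Rland_eq // inE.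
  by case/andP=> -> ->.
Qed.

Lemma I2_other (ro ro' x : 'I_2) : ro != ro' -> x != ro -> x = ro'.
Proof.
by case: (I2cases ro) => ->; case: (I2cases ro') => ->; case: (I2cases x) => ->.
Qed.

Lemma adj_last k (ro : 'I_2) (w : 'I_2 * 'I_k.+1) : 1 <= k ->
  grid_adj (ro, ord_max) w =
  ((w.1 == ro) && ((w.2 : nat) == k.-1)) || (((w.2 : nat) == k) && (w.1 != ro)).
Proof.
move=> hk; case: w => w1 w2; rewrite /grid_adj /= -!val_eqE /=.
have := ltn_ord w2; lia.
Qed.

Section Ext.
Variables (k : nat) (hk : 1 <= k).

Definition iota (p : 'I_2 * 'I_k) : 'I_2 * 'I_k.+1 := (p.1, widen_ord (leqnSn k) p.2).
Definition res (r : rect k.+1) : rect k := [ffun p => r (iota p)].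
Definition ext (r : rect k) : rect k.+1 := [ffun p : 'I_2 * 'I_k.+1 => rat r p.1 p.2 || ((p.2 : nat) == k)].

Lemma iota_inj : injective iota.
Proof.
move=> [a1 a2] [b1 b2] [e1 e2]; congr (_, _) => //; apply/val_inj.
exact: e2.
Qed.

Lemma iota_adj p q : grid_adj (iota p) (iota q) = grid_adj p q.
Proof. by case: p q => [a1 a2] [b1 b2]; rewrite /grid_adj /= -!val_eqE /=. Qed.

Lemma iota_codom (x : 'I_2 * 'I_k.+1) : (x.2 : nat) != k -> exists p, x = iota p.
Proof.
case: x => x1 x2 /= nx; have lt : (x2 : nat) < k by have := ltn_ord x2; lia.
by exists (x1, Ordinal lt); congr (_, _); apply/val_inj.
Qed.

Lemma rat_ext (r : rect k) row j : rat (ext r) row j = rat r row j || (j == k).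
Proof.
rewrite /rat; case: insubP => [i _ <-|]; first by rewrite ffunE.
rewrite /= => hj; case: insubP => [i' _ ei|//]; first by move: (ltn_ord i'); rewrite ei; lia.
by rewrite /=; lia.
Qed.

Lemma res_ext (r : rect k) : res (ext r) = r.
Proof.
apply/ffunP=> [[p1 p2]]; rewrite !ffunE /=.
rewrite (_ : (p2 : nat) == k = false); last by have := ltn_ord p2; lia.
by rewrite orbF rat_val.
Qed.

Lemma ext_res (r : rect k.+1) : r (top, ord_max) -> r (bot, ord_max) -> ext (res r) = r.
Proof.
move=> ra rb; apply/ffunP=> [[p1 p2]]; rewrite ffunE /=.
case: (ltnP p2 k) => h.
  rewrite /rat insubT /= ffunE /= (_ : (p2 : nat) == k = false); last by lia.
  by rewrite orbF; congr (r (_, _)); apply/val_inj.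
have e : p2 = ord_max by apply/val_inj; have := ltn_ord p2; rewrite /=; lia.
rewrite e eqxx orbT; by case: (I2cases p1) => ->.
Qed.

Lemma rat_res (r : rect k.+1) row j : rat (res r) row j = (j < k) && rat r row j.
Proof.
rewrite /rat; case: insubP => [i _ <-|]. rewrite ffunE ltn_ord /=.
  case: insubP => [i2 _ ei|]; last by have := ltn_ord i; rewrite /=; lia.
  by congr (r (_, _)); apply/val_inj; rewrite /= ei.
rewrite /= => /negbTE ->; by [].
Qed.


Definition W0 (r : rect k.+1) := fun p : 'I_2 * 'I_k.+1 => ((p.2 : nat) != k) && r p.

Lemma W0_emb (r : rect k.+1) :
  connectedb (@grid_adj k.+1) (W0 r) = connectedb (@grid_adj k) (fun p => res r p).
Proof.
apply: (conn_embed iota_inj iota_adj).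
  by move=> x /andP[nx _]; apply: iota_codom.
by move=> a; rewrite /W0 ffunE /=; have := ltn_ord a.2; case: eqP => //=; lia.
Qed.

Lemma W0_all (r : rect k.+1) : [forall x, ~~ W0 r x] = [forall p, ~~ res r p].
Proof.
apply/forallP/forallP => H x.
  by rewrite ffunE; have := H (iota x); rewrite /W0 /=; have := ltn_ord x.2; case: eqP => //=; lia.
rewrite /W0; case: eqP => //= /eqP nx; have [p ->] := iota_codom nx.
by have := H p; rewrite ffunE.
Qed.

(* step 1: remove (ro', max) which is pendant to (ro, max) *)
Lemma step1 (r : rect k.+1) (ro ro' : 'I_2) : ro != ro' ->
  r (ro, ord_max) -> r (ro', ord_max) -> rat r ro' k.-1 = false ->
  connectedb (@grid_adj k.+1) (fun p => r p) =
  connectedb (@grid_adj k.+1) (fun x => (x != (ro', ord_max)) && r x).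
Proof.
move=> hro ra rb rs.
apply: (conn_pendant (@grid_sym _) (v := (ro', ord_max)) (u := (ro, ord_max))).
- by move=> x; case: eqP => [->|] //=.
- by rewrite eqxx.
- by rewrite ra andbT xpair_eqE eqxx andbT.
- by rewrite adj_last //= eqxx hro orbT.
- move=> [w1 w2] /andP[nw rw]; rewrite adj_last //= => /orP[/andP[/eqP e1 e2]|/andP[e2 e1]].
    have lt : k.-1 < k.+1 by lia.
    have ew2 : w2 = Ordinal lt by apply/val_inj; rewrite /= (eqP e2).
    by move: rw rs; rewrite e1 ew2 -(rat_val r ro' (Ordinal lt)) => ->.
  have ew2 : w2 = ord_max by apply/val_inj; rewrite /= (eqP e2).
  by rewrite ew2 (@I2_other ro' ro w1) // eq_sym.
Qed.

(* step 2: after removing (ro', max), (ro, max) is pendant / isolated *)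
Lemma step2 (r : rect k.+1) (ro ro' : 'I_2) : ro != ro' ->
  r (ro, ord_max) ->
  connectedb (@grid_adj k.+1) (fun x => (x != (ro', ord_max)) && r x) =
  if rat r ro k.-1 then connectedb (@grid_adj k) (fun p => res r p)
  else [forall p, ~~ res r p].
Proof.
move=> hro ra.
have EW : forall x, (x != (ro', ord_max)) && r x = (x == (ro, ord_max)) || W0 r x.
  move=> [x1 x2]; rewrite /W0 !xpair_eqE /= -[x2 == ord_max]val_eqE /=.
  case: (eqVneq (x2 : nat) k) => [e|ne] /=; last by rewrite !andbF.
  have -> : x2 = ord_max by apply/val_inj.
  rewrite !andbT orbF.
  case: (eqVneq x1 ro) => [->|n1]; first by rewrite hro ra.
  by rewrite (I2_other hro n1) eqxx.
have nWv : ~~ W0 r (ro, ord_max) by rewrite /W0 /= eqxx.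
have lt : k.-1 < k.+1 by lia.
case: (boolP (rat r ro k.-1)) => rt.
  rewrite -W0_emb; apply: (conn_pendant (@grid_sym _) (u := (ro, Ordinal lt)) EW nWv).
  - rewrite /W0 /= -(rat_val r ro (Ordinal lt)) rt andbT; lia.
  - by rewrite adj_last //= !eqxx.
  - move=> [w1 w2] /andP[nw rw]; rewrite adj_last //= => /orP[/andP[/eqP e1 e2]|/andP[e2 _]].
      by rewrite e1; congr (_, _); apply/val_inj; rewrite /= (eqP e2).
    by rewrite e2 in nw.
rewrite -W0_all; apply: (conn_isolated EW nWv).
move=> [w1 w2] /andP[nw rw]; rewrite adj_last //=; apply/negP => /orP[/andP[/eqP e1 e2]|/andP[e2 _]].
  have ew2 : w2 = Ordinal lt by apply/val_inj; rewrite /= (eqP e2).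
  by move: rw rt; rewrite e1 ew2 -(rat_val r ro (Ordinal lt)) => ->.
by rewrite e2 in nw.
Qed.


Lemma conn_ext (r : rect k.+1) : r (top, ord_max) -> r (bot, ord_max) ->
  ~~ (rat r top k.-1 && rat r bot k.-1) ->
  connectedb (@grid_adj k.+1) (fun p => r p) =
  if rat r top k.-1 || rat r bot k.-1 then connectedb (@grid_adj k) (fun p => res r p)
  else [forall p, ~~ res r p].
Proof.
move=> ra rb nb.
case: (boolP (rat r top k.-1)) => t.
  have s : rat r bot k.-1 = false by move: nb; rewrite t; case: (rat r bot k.-1).
  by rewrite (@step1 r top bot) // (@step2 r top bot) // t.
case: (boolP (rat r bot k.-1)) => s.
  by rewrite (@step1 r bot top) ?(negbTE t) // (@step2 r bot top) // s.
by rewrite (@step1 r top bot) ?(negbTE s) // (@step2 r top bot) // (negbTE t).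
Qed.

Lemma no2x2_ext (r : rect k) :
  no_2x2 (ext r) = no_2x2 r && ~~ (rat r top k.-1 && rat r bot k.-1).
Proof.
apply/forallP/andP => [H|[/forallP H1 H2] j].
  split.
    apply/forallP=> j; have := H (widen_ord (leqnSn k) j); rewrite !rat_ext /=.
    have lj := ltn_ord j.
    rewrite (_ : (j : nat) == k = false); last by lia.
    rewrite !orbF; case: (eqVneq (j.+1) k) => [e|ne]; last by rewrite !orbF.
    by rewrite e (rat_out r top (leqnn k)) (rat_out r bot (leqnn k)) !andbF.
  have lt : k.-1 < k.+1 by lia.
  have := H (Ordinal lt); rewrite !rat_ext /= (_ : k.-1 == k = false); last by lia.
  by rewrite (_ : k.-1.+1 == k = true) ?orbT ?orbF ?andbT //; lia.
rewrite !rat_ext; have lj := ltn_ord j.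
case: (ltnP j k.-1) => h.
  have lt : (j : nat) < k by lia.
  have := H1 (Ordinal lt); rewrite /= (_ : (j : nat) == k = false); last by lia.
  by rewrite (_ : j.+1 == k = false) ?orbF //; lia.
case: (eqVneq (j : nat) k.-1) => [e|ne].
  rewrite e (_ : k.-1 == k = false); last by lia.
  by rewrite (_ : k.-1.+1 == k = true) ?orbT ?orbF ?andbT //; lia.
have e : (j : nat) = k by lia.
rewrite e eqxx (rat_out r top (leqnSn k)) (rat_out r bot (leqnSn k)) !orbT /=.
by rewrite (_ : k.+1 == k = false) ?andbF //; lia.
Qed.

Lemma ext_mem (r : rect k) :
  (ext r \in NurCol k.+1 2) = (r \in NurCol k 1 :|: [set Rland k]).
Proof.
rewrite !inE /= !rat_ext eqxx !orbT /= andbT no2x2_ext.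
have ek : k.-1 == k = false by lia.
have Rt : forall row, rat r row k.-1 -> (r == Rland k) = false.
  by move=> row h; apply/negbTE/eqP => er; move: h; rewrite er rat_Rland.
case: (boolP (rat r top k.-1 && rat r bot k.-1)) => ts.
  case/andP: (ts) => t s; rewrite !andbF /= t s /= (Rt _ t).
  by case: (connectedb _ _); case: (no_2x2 r).
have ea : ext r (top, ord_max) by rewrite ffunE /= eqxx orbT.
have eb : ext r (bot, ord_max) by rewrite ffunE /= eqxx orbT.
rewrite conn_ext // ?rat_ext ?ek ?orbF //.
rewrite res_ext /= andbT.
move: ts; case: (boolP (rat r top k.-1)) => t; case: (boolP (rat r bot k.-1)) => s //= _.
- by rewrite addn0 eqxx andbT (Rt _ t) orbF.
- by rewrite add0n eqxx andbT (Rt _ s) orbF.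
- rewrite add0n andbF /= Rland_eq.
  case: (boolP [forall p, ~~ r p]) => H //.
  have := Rland_nur k; rewrite -(eqP (_ : r == Rland k)) ?Rland_eq // inE.
  by case/andP=> _ ->.
Qed.

End Ext.

Lemma card_ext k (hk : 1 <= k) : #|NurCol k.+1 2| = #|NurCol k 1| + 1.
Proof.
have -> : NurCol k.+1 2 = @ext k @: (NurCol k 1 :|: [set Rland k]).
  apply/setP=> r'; apply/idP/imsetP => [Hr|[r Hr ->]]; last by rewrite ext_mem.
  have [ra rb] : r' (top, ord_max) /\ r' (bot, ord_max).
    have e1 : rat r' top k = r' (top, ord_max) := rat_val r' top ord_max.
    have e2 : rat r' bot k = r' (bot, ord_max) := rat_val r' bot ord_max.
    move: Hr; rewrite inE /= e1 e2 => /andP[_].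
    by case: (r' (top, _)); case: (r' (bot, _)).
  exists (@res k r'); last by rewrite ext_res.
  by rewrite -ext_mem // ext_res.
rewrite card_imset; last by move=> x y /(congr1 (@res k)); rewrite !res_ext.
rewrite setUC cardsU1 addnC; congr (_ + _).
by rewrite inE /= !rat_Rland andbF.
Qed.

Theorem lemma5p2 (k : nat) (hk : 1 <= k) :
  ({in Mo0 k &, injective (@redcontr k)} /\
   (@redcontr k) @: Mo0 k = Nur k) /\
  ({in Mo1 k &, injective (@redcontr k)} /\
   (@redcontr k) @: Mo1 k = NurCol k 1 :|: [set Rland k]) /\
  (#|Mo k.*2.+1| = #|Nur k| + #|NurCol k 1| + 1 /\
   #|Mo k.*2.+1| = #|Nur k| + #|NurCol k.+1 2|).
Proof.
have inj0 : {in Mo0 k &, injective (@redcontr k)}.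
  move=> c1 c2; rewrite !Mo0E // => /andP[n1 _] /andP[n2 _] E.
  by apply: redcontr_inj E _; rewrite (negbTE n1) (negbTE n2).
have inj1 : {in Mo1 k &, injective (@redcontr k)}.
  move=> c1 c2; rewrite !Mo1E // => /andP[n1 _] /andP[n2 _] E.
  by apply: redcontr_inj E _; rewrite n1 n2.
have im0 : (@redcontr k) @: Mo0 k = Nur k.
  apply/setP => r; apply/imsetP/idP => [[c Hc ->]|Hr].
    by move: Hc; rewrite Mo0E // => /andP[].
  exists (lift r false); last by rewrite redcontr_lift.
  by rewrite Mo0E // sat_lift_k redcontr_lift Hr.
have im1 : (@redcontr k) @: Mo1 k = NurCol k 1 :|: [set Rland k].
  apply/setP => r; apply/imsetP/idP => [[c Hc ->]|Hr].
    by move: Hc; rewrite Mo1E // => /andP[].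
  exists (lift r true); last by rewrite redcontr_lift.
  by rewrite Mo1E // sat_lift_k redcontr_lift Hr.
have cM : #|Mo k.*2.+1| = #|Nur k| + #|NurCol k 1| + 1.
  rewrite -(cardsID [set c : strip k.*2.+1 | sat c k] (Mo k.*2.+1)).
  have -> : Mo k.*2.+1 :&: [set c | sat c k] = Mo1 k.
    by apply/setP => c; rewrite !inE.
  have -> : Mo k.*2.+1 :\: [set c | sat c k] = Mo0 k.
    by apply/setP => c; rewrite !inE andbC.
  rewrite -(card_in_imset inj0) -(card_in_imset inj1) im0 im1.
  rewrite setUC cardsU1 (_ : Rland k \notin NurCol k 1); first by change (1 + #|NurCol k 1| + #|Nur k| = #|Nur k| + #|NurCol k 1| + 1); lia.
  by rewrite inE /= !rat_Rland andbF.
split; first by [].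
split; first by [].
by split => //; rewrite cM card_ext // addnA.
Qed.
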